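(* Consider the FJ-FA system with availability one and locality two (defined in the context), with systematic service rate $\gamma$ and recovery service rates $\mu$, and let $\nu = \gamma + 2\mu$. Then the limiting fraction $w_s$ of requests completed by the systematic server and the limiting fraction $w_r$ of requests completed by the recovery group satisfy $$w_s \ge \frac{\gamma\nu}{\gamma\nu + 2\mu^2}, \qquad w_r \le \frac{2\mu^2}{\gamma\nu + 2\mu^2}.$$
   Context: Three servers store $a$ (systematic server), $b$ and $a+b$ (the two servers of the single recovery group for $a$). Requests arrive as a Poisson process of rate $\lambda$, and every request asks for $a$ (FJ-FA). Each request is replicated into a copy at the systematic server and a copy at the recovery group; the latter is forked into one sub-copy at each of the two recovery servers and completes when both sub-copies finish. The request completes as soon as its systematic copy finishes or its recovery-group copy completes, and all its outstanding copies/sub-copies (queued or in service) are then removed immediately. Each server has a FCFS queue and serves one sub-copy at a time; service times are independent across servers and copies, $\mathrm{Exp}(\gamma)$ at the systematic server and $\mathrm{Exp}(\mu)$ at each recovery server. The system is assumed stable and $w_s$, $w_r$ are steady-state (limiting) fractions of request completions, with $w_s + w_r = 1$. *)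

(* Defs.v *)
From HB Require Import structures.
From mathcomp Require Import all_boot all_order all_algebra.
From mathcomp Require Import all_classical all_reals all_analysis.
Set Implicit Arguments. Unset Strict Implicit. Unset Printing Implicit Defensive.
Import Order.TTheory GRing.Theory Num.Theory.
Local Open Scope classical_set_scope.
Local Open Scope ring_scope.

(* Servers: systematic server (stores a), recovery servers R1 (stores b) and *)
(* R2 (stores a+b).  Every request is replicated to all three servers; the   *)
(* request completes when its systematic copy finishes, or when BOTH of its  *)
(* recovery sub-copies (at R1 and R2) finish; all its remaining copies are   *)
(* then removed.  All queues are FCFS, one sub-copy in service per server.   *)
(* State of the system: the sequence of requests present, ordered by arrival *)
(* (oldest first).  Each request records which of its recovery sub-copies    *)
(* have finished: (done at R1, done at R2).  (A request whose systematic copy*)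
(* finished, or with both recovery sub-copies finished, has left.)           *)
(* By FCFS, the systematic server serves the oldest request; recovery server *)
(* Rj serves the oldest request whose Rj-sub-copy is not yet finished.       *)
(* With Poisson(lambda) arrivals and exponential services this is a          *)
(* continuous-time Markov chain whose transitions are listed below.          *)

Definition fjfa_state := seq (bool * bool).

Inductive fjfa_event := Arrival | SysCompletion | RecCompletion | RecPartial.

(* j = false : recovery server R1 ; j = true : recovery server R2 *)
Definition rec_done (j : bool) (x : bool * bool) : bool := if j then x.2 else x.1.
Definition rec_mark (j : bool) (x : bool * bool) : bool * bool :=
  if j then (x.1, true) else (true, x.2).

Definition rec_next (j : bool) (s : fjfa_state) : option (fjfa_state * bool) :=
  let i := find (fun x => ~~ rec_done j x) s in
  if (i < size s)%N then
    let x' := rec_mark j (nth (false, false) s i) in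
    if x'.1 && x'.2 then Some (take i s ++ drop i.+1 s, true)
    else Some (set_nth (false, false) s i x', false)
  else None.

Definition rec_trans {R : realType} (mu : R) (j : bool) (s : fjfa_state)
  : seq (R * fjfa_state * fjfa_event) :=
  match rec_next j s with
  | Some (s', true) => [:: (mu, s', RecCompletion)]
  | Some (s', false) => [:: (mu, s', RecPartial)]
  | None => [::]
  end.

Definition fjfa_trans {R : realType} (lam gam mu : R) (s : fjfa_state)
  : seq (R * fjfa_state * fjfa_event) :=
  (lam, rcons s (false, false), Arrival)
  :: (if s is _ :: s' then [:: (gam, s', SysCompletion)] else [::])
  ++ rec_trans mu false s ++ rec_trans mu true s.

Definition fjfa_rate {R : realType} (lam gam mu : R) (s t : fjfa_state) : R :=
  \sum_(e <- fjfa_trans lam gam mu s | e.1.2 == t) e.1.1.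

Definition fjfa_out {R : realType} (lam gam mu : R) (s : fjfa_state) : R :=
  \sum_(e <- fjfa_trans lam gam mu s | e.1.2 != s) e.1.1.

Definition is_sys_completion (e : fjfa_event) : bool :=
  if e is SysCompletion then true else false.
Definition is_rec_completion (e : fjfa_event) : bool :=
  if e is RecCompletion then true else false.

Definition sys_compl_rate {R : realType} (lam gam mu : R) (s : fjfa_state) : R :=
  \sum_(e <- fjfa_trans lam gam mu s | is_sys_completion e.2) e.1.1.
Definition rec_compl_rate {R : realType} (lam gam mu : R) (s : fjfa_state) : R :=
  \sum_(e <- fjfa_trans lam gam mu s | is_rec_completion e.2) e.1.1.

Definition fjfa_stationary {R : realType} (lam gam mu : R) (pi : fjfa_state -> R) : Prop :=
  (forall s, 0 <= pi s) /\
  (\esum_(s in [set: fjfa_state]) (pi s)%:E = 1%E) /\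
  (forall t, \esum_(s in [set s | s != t]) (pi s * fjfa_rate lam gam mu s t)%:E
             = (pi t * fjfa_out lam gam mu t)%:E).

Definition sys_throughput {R : realType} (lam gam mu : R) (pi : fjfa_state -> R) : R :=
  fine (\esum_(s in [set: fjfa_state]) (pi s * sys_compl_rate lam gam mu s)%:E).
Definition rec_throughput {R : realType} (lam gam mu : R) (pi : fjfa_state -> R) : R :=
  fine (\esum_(s in [set: fjfa_state]) (pi s * rec_compl_rate lam gam mu s)%:E).

Definition w_s {R : realType} (lam gam mu : R) (pi : fjfa_state -> R) : R :=
  sys_throughput lam gam mu pi
  / (sys_throughput lam gam mu pi + rec_throughput lam gam mu pi).
Definition w_r {R : realType} (lam gam mu : R) (pi : fjfa_state -> R) : R :=
  rec_throughput lam gam mu pi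
  / (sys_throughput lam gam mu pi + rec_throughput lam gam mu pi).

(* Main.v *)
Require Import Defs.
From HB Require Import structures.
From mathcomp Require Import all_boot all_order all_algebra.
From mathcomp Require Import all_classical all_reals all_analysis.
From mathcomp Require Import ring lra zify.
Import Order.TTheory GRing.Theory Num.Theory.
Local Open Scope ring_scope.
Local Open Scope classical_set_scope.
Set Implicit Arguments. Unset Strict Implicit.

Definition xb (b : bool) : bool * bool := if b then (false, true) else (true, false).
Definition mk (b : bool) (k r : nat) : fjfa_state :=
  nseq k (xb b) ++ nseq r (false, false).
Definition kk (s : fjfa_state) : nat := count (fun x => x != (false, false)) s.
Definition goodb (s : fjfa_state) : bool :=
  (s == mk false (kk s) (size s - kk s)) || (s == mk true (kk s) (size s - kk s)).

Lemma kk_mk b k r : kk (mk b k r) = k.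
Proof. by rewrite /kk count_cat !count_nseq; case: b => /=; rewrite mul1n mul0n addn0. Qed.

Lemma size_mk b k r : size (mk b k r) = (k + r)%N.
Proof. by rewrite size_cat !size_nseq. Qed.

Lemma goodb_mk b k r : goodb (mk b k r).
Proof. by rewrite /goodb kk_mk size_mk addKn; case: b; rewrite eqxx ?orbT. Qed.

Lemma goodbP s : goodb s -> exists b k r, s = mk b k r.
Proof. by case/orP => /eqP ->; [exists false | exists true]; do 2 eexists. Qed.

Lemma rec_next_cons_done j x s : rec_done j x ->
  rec_next j (x :: s) = omap (fun p => (x :: p.1, p.2)) (rec_next j s).
Proof.
move=> Hx; rewrite /rec_next /= Hx /= ltnS.
by case: ifP => // _; case: ifP.
Qed.

Lemma rec_next_cons00 j s :
  rec_next j ((false, false) :: s) = Some (xb j :: s, false).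
Proof. by case: j. Qed.

Lemma rec_next_other b s : rec_next (~~ b) (xb b :: s) = Some (s, true).
Proof. by case: b; rewrite /rec_next /= ?drop0. Qed.

Lemma rec_next_own b k r : rec_next b (mk b k r) =
  if r is r'.+1 then Some (mk b k.+1 r', false) else None.
Proof.
elim: k => [|k IH].
  by case: r => [|r] //=; rewrite rec_next_cons00.
rewrite /mk /= rec_next_cons_done; last by case: (b).
by rewrite -/(mk b k r) IH; case: (r).
Qed.

Lemma rec_next_otherk b k r : rec_next (~~ b) (mk b k.+1 r) = Some (mk b k r, true).
Proof. exact: rec_next_other. Qed.

Lemma rcons_nseq (n : nat) (x : bool * bool) : rcons (nseq n x) x = nseq n.+1 x.
Proof. by elim: n => //= n ->. Qed.

Lemma rcons_mk b k r : rcons (mk b k r) (false, false) = mk b k r.+1.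
Proof. by rewrite /mk rcons_cat rcons_nseq. Qed.

Lemma trans_nil (R : realType) (lam gam mu : R) (F : R * fjfa_state * fjfa_event -> R) :
  \sum_(e <- fjfa_trans lam gam mu [::]) F e = F (lam, [:: (false, false)], Arrival).
Proof. by rewrite /fjfa_trans /rec_trans /= big_cons big_nil addr0. Qed.

Lemma trans_zero (R : realType) (lam gam mu : R) r (F : R * fjfa_state * fjfa_event -> R) :
  \sum_(e <- fjfa_trans lam gam mu (nseq r.+1 (false, false))) F e =
  F (lam, nseq r.+2 (false, false), Arrival) + F (gam, nseq r (false, false), SysCompletion)
  + F (mu, mk false 1 r, RecPartial) + F (mu, mk true 1 r, RecPartial).
Proof.
rewrite /fjfa_trans /rec_trans /= rcons_nseq.
by rewrite !big_cons big_nil addr0 !addrA.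
Qed.

Lemma trans_pos (R : realType) (lam gam mu : R) b k r (F : R * fjfa_state * fjfa_event -> R) :
  \sum_(e <- fjfa_trans lam gam mu (mk b k.+1 r)) F e =
  F (lam, mk b k.+1 r.+1, Arrival) + F (gam, mk b k r, SysCompletion)
  + (if r is r'.+1 then F (mu, mk b k.+2 r', RecPartial) else 0)
  + F (mu, mk b k r, RecCompletion).
Proof.
rewrite /fjfa_trans rcons_mk /rec_trans.
have Ho := rec_next_own b k.+1 r.
have Hx := rec_next_otherk b k r.
case: b Ho {Hx} => Ho; rewrite Ho /= ?drop0 -?/(mk true k r) -?/(mk false k r); case: r {Ho} => [|r]; rewrite !big_cons ?big_cat /= ?big_cons ?big_nil /=. all: ring.
Qed.

Lemma esumZl (R : realType) (T : choiceType) (D : set T) (c : R) (a : T -> \bar R) :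
  0 <= c -> (forall t, (0 <= a t)%E) ->
  (c%:E * (\esum_(t in D) a t))%E = \esum_(t in D) (c%:E * a t)%E.
Proof.
move=> c0 a0; rewrite /esum -ereal_supZl //; last first.
  apply/set0P; exists 0%E; exists set0; first exact: fsets_set0.
  by rewrite fsbig_set0.
congr ereal_sup; apply/seteqP; split => y /=.
- move=> [x [X HX <-] <-]; exists X => //.
  have finX : finite_set X by case: HX.
  by rewrite !fsbig_finite // ge0_sume_distrr.
- move=> [X HX <-]; exists (\sum_(i \in X) a i)%E; first by exists X.
  have finX : finite_set X by case: HX.
  by rewrite !fsbig_finite // ge0_sume_distrr.
Qed.

Lemma esum_single (R : realType) (T : choiceType) (D : set T) (h : T -> \bar R) x :
  (forall t, t != x -> h t = 0%E) -> (0 <= h x)%E -> D x ->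
  \esum_(t in D) h t = h x.
Proof.
move=> h0 hx Dx.
rewrite (esumID [set x]); last first.
  by move=> t _; case: (eqVneq t x) => [->|/h0 ->].
rewrite setIidr; last by move=> t ->.
rewrite esum_set1 // esum1 ?adde0 // => t [_ /= tx]. by apply: h0; apply/eqP.
Qed.

Lemma esum_single_out (R : realType) (T : choiceType) (D : set T) (h : T -> \bar R) x :
  (forall t, t != x -> h t = 0%E) -> ~ D x ->
  \esum_(t in D) h t = 0%E.
Proof.
move=> h0 Dx; apply: esum1 => t Dt; apply: h0; apply/eqP => tx.
by apply: Dx; rewrite -tx.
Qed.

Lemma sum_rate_ge0 (R : realType) (l : seq (R * fjfa_state * fjfa_event)) (P : pred _) :
  all (fun e => 0 <= e.1.1) l -> 0 <= \sum_(e <- l | P e) e.1.1.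
Proof.
elim: l => [|e l IH] /=; first by rewrite big_nil.
move=> /andP[e0 /IH {}IH]; rewrite big_cons; case: (P e) => //.
exact: addr_ge0.
Qed.

Lemma inner (R : realType) (l : seq (R * fjfa_state * fjfa_event)) (s : fjfa_state)
  (c : R) (f : fjfa_state -> R) :
  0 <= c -> (forall t, 0 <= f t) -> all (fun e => 0 <= e.1.1) l ->
  \esum_(t in [set t | t != s]) (f t * c * \sum_(e <- l | e.1.2 == t) e.1.1)%:E
  = (c * \sum_(e <- l | e.1.2 != s) e.1.1 * f e.1.2)%:E.
Proof.
move=> c0 f0; elim: l => [|e l IH] /=.
  by rewrite big_nil mulr0 esum1 // => t _; rewrite big_nil mulr0.
move=> /andP[e0 Hall]; have {}IH := IH Hall.
have Hl t := sum_rate_ge0 (fun e : R * fjfa_state * fjfa_event => e.1.2 == t) Hall.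
have Ht t : (f t * c * \sum_(e0 <- e :: l | e0.1.2 == t) e0.1.1)%:E =
   ((f t * c * (if e.1.2 == t then e.1.1 else 0))%:E +
    (f t * c * \sum_(e0 <- l | e0.1.2 == t) e0.1.1)%:E)%E.
  by rewrite big_cons -EFinD -mulrDr; case: ifP; rewrite ?add0r.
rewrite (eq_esum (fun t _ => Ht t)) esumD; first last.
- by move=> t _; rewrite lee_fin; apply: mulr_ge0 => //; apply: mulr_ge0.
- by move=> t _; rewrite lee_fin; apply: mulr_ge0 => //; [apply: mulr_ge0|case: ifP].
rewrite IH big_cons.
have h0 t : t != e.1.2 -> (f t * c * (if e.1.2 == t then e.1.1 else 0))%:E = 0%E.
  by rewrite eq_sym => /negPf ->; rewrite mulr0.
case: (eqVneq e.1.2 s) => [es|ens].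
  by rewrite (esum_single_out h0) ?add0e // /= es eqxx.
rewrite (esum_single h0) //=; last by rewrite eqxx lee_fin; apply: mulr_ge0 => //; apply: mulr_ge0.
rewrite eqxx -EFinD; congr EFin; ring.
Qed.

Lemma trans_ge0 (R : realType) (lam gam mu : R) s :
  0 <= lam -> 0 <= gam -> 0 <= mu ->
  all (fun e => 0 <= e.1.1) (fjfa_trans lam gam mu s).
Proof.
move=> l0 g0 m0; rewrite /fjfa_trans /= l0 /= !all_cat.
apply/and3P; split.
- by case: s => //= *; rewrite g0.
- by rewrite /rec_trans; case: (rec_next _ _) => [[? []]|] //=; rewrite m0.
- by rewrite /rec_trans; case: (rec_next _ _) => [[? []]|] //=; rewrite m0.
Qed.

Definition gsum (R : realType) (lam gam mu : R) (f : fjfa_state -> R) s :=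
  \sum_(e <- fjfa_trans lam gam mu s | e.1.2 != s) e.1.1 * f e.1.2.

Lemma gen (R : realType) (lam gam mu : R) (pi : fjfa_state -> R) (f : fjfa_state -> R) :
  0 <= lam -> 0 <= gam -> 0 <= mu -> fjfa_stationary lam gam mu pi ->
  (forall s, 0 <= f s) ->
  \esum_(s in [set: fjfa_state]) (pi s * gsum lam gam mu f s)%:E =
  \esum_(s in [set: fjfa_state]) (pi s * fjfa_out lam gam mu s * f s)%:E.
Proof.
move=> l0 g0 m0 [pi0 [_ bal]] f0.
have tr0 s := trans_ge0 s l0 g0 m0.
have rate0 s t : 0 <= fjfa_rate lam gam mu s t := sum_rate_ge0 _ (tr0 s).
transitivity (\esum_(k in [set: fjfa_state] `*`` (fun s => [set t | t != s]))
   (f k.2 * pi k.1 * fjfa_rate lam gam mu k.1 k.2)%:E).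
  rewrite -(esum_esum (a := fun s t => (f t * pi s * fjfa_rate lam gam mu s t)%:E)); last first.
    by move=> i j _ _; rewrite lee_fin; apply: mulr_ge0 => //; apply: mulr_ge0.
  by apply: eq_esum => s _; rewrite /gsum -inner.
symmetry.
transitivity (\esum_(k in [set: fjfa_state] `*`` (fun t => [set s | s != t]))
   (f k.1 * (pi k.2 * fjfa_rate lam gam mu k.2 k.1))%:E).
  rewrite -(esum_esum (a := fun t s => (f t * (pi s * fjfa_rate lam gam mu s t))%:E)); last first.
    by move=> i j _ _; rewrite lee_fin; apply: mulr_ge0 => //; apply: mulr_ge0.
  apply: eq_esum => t _.
  rewrite mulrC EFinM -bal esumZl //; last first.
    by move=> s; rewrite lee_fin; apply: mulr_ge0.
rewrite (@reindex_esum _ _ _ ([set: fjfa_state] `*`` (fun s => [set t | t != s])) _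
   (fun k => (k.2, k.1))).
  by apply: eq_esum => k _ /=; rewrite mulrA.
split.
- by move=> [a b] /= [_ H]; split => //=; rewrite eq_sym.
- by move=> [a b] [c d] _ _ [-> ->].
- move=> [a b] /= [_ H]; exists (b, a) => //=; split => //; by rewrite eq_sym.
Qed.

Lemma goodb_nseq n : goodb (nseq n (false, false)).
Proof. exact: (goodb_mk false 0 n). Qed.

Lemma kk_nseq n : kk (nseq n (false, false)) = 0%N.
Proof. exact: (kk_mk false 0 n). Qed.

Lemma sum_good (R : realType) (lam gam mu : R) s (F G : R * fjfa_state * fjfa_event -> R) :
  goodb s -> (forall x t ev, goodb t -> F (x, t, ev) = G (x, t, ev)) ->
  \sum_(e <- fjfa_trans lam gam mu s) F e = \sum_(e <- fjfa_trans lam gam mu s) G e.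
Proof.
move=> /goodbP [b [k [r ->]]] FG.
case: k => [|k].
  case: r => [|r].
    by rewrite /mk /= !trans_nil FG // (goodb_nseq 1).
  change (mk b 0 r.+1) with (nseq r.+1 (false, false)).
  by rewrite !trans_zero !FG ?goodb_nseq ?goodb_mk.
rewrite !trans_pos; case: r => [|r]; by rewrite !FG ?goodb_mk.
Qed.

Lemma sys_rate_eq (R : realType) (lam gam mu : R) s :
  sys_compl_rate lam gam mu s = if s is _ :: _ then gam else 0.
Proof.
rewrite /sys_compl_rate /fjfa_trans big_cons /= !big_cat /=.
have H j : \sum_(e <- rec_trans mu j s | is_sys_completion e.2) e.1.1 = 0.
  by rewrite /rec_trans; case: (rec_next _ _) => [[? []]|]; rewrite ?big_cons ?big_nil.
rewrite !H {H}; case: s => [|x s]; rewrite ?big_nil ?big_cons ?big_nil //=.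
all: by rewrite !addr0.
Qed.

Lemma sum_rate_le (R : realType) (l : seq (R * fjfa_state * fjfa_event)) (P : pred _) :
  all (fun e => 0 <= e.1.1) l -> \sum_(e <- l | P e) e.1.1 <= \sum_(e <- l) e.1.1.
Proof.
elim: l => [|e l IH] /=; first by rewrite !big_nil.
move=> /andP[e0 /IH {}IH]; rewrite !big_cons; case: (P e).
  by rewrite lerD2l.
by rewrite -(add0r (\sum_(j <- l | P j) j.1.1)) lerD.
Qed.

Lemma rate_le (R : realType) (lam gam mu : R) s (P : pred _) :
  0 <= lam -> 0 <= gam -> 0 <= mu ->
  \sum_(e <- fjfa_trans lam gam mu s | P e) e.1.1 <= lam + gam + 2 * mu.
Proof.
move=> l0 g0 m0; apply: le_trans (sum_rate_le _ (trans_ge0 s l0 g0 m0)) _.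
rewrite /fjfa_trans big_cons /= !big_cat /=.
have H j : \sum_(e <- rec_trans mu j s) e.1.1 <= mu.
  by rewrite /rec_trans; case: (rec_next _ _) => [[? []]|]; rewrite ?big_cons ?big_nil ?addr0.
have H2 : \sum_(e <- if s is _ :: s' then [:: (gam, s', SysCompletion)] else [::]) e.1.1 <= gam.
  by case: (s) => [|? ?]; rewrite ?big_cons ?big_nil ?addr0.
have := H false; have := H true; lra.
Qed.

Lemma out_le (R : realType) (lam gam mu : R) s :
  0 <= lam -> 0 <= gam -> 0 <= mu ->
  fjfa_out lam gam mu s <= lam + gam + 2 * mu.
Proof. exact: rate_le. Qed.

Lemma out_nil (R : realType) (lam gam mu : R) : fjfa_out lam gam mu [::] = lam.
Proof. by rewrite /fjfa_out big_mkcond trans_nil. Qed.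

Definition rcr_fun (R : realType) (e : R * fjfa_state * fjfa_event) : R :=
  if is_rec_completion e.2 then e.1.1 else 0.

Definition phif (R : realType) (mu : R) (m : nat) (t : fjfa_state) : R :=
  mu * (minn (kk t) m)%:R.

Lemma pointwise (R : realType) (lam gam mu : R) (m : nat) s :
  0 <= lam -> 0 <= gam -> 0 <= mu -> (0 < m)%N -> goodb s ->
  (gam + 2 * mu) * rec_compl_rate lam gam mu s * (kk s <= m)%:R
  + \sum_(e <- fjfa_trans lam gam mu s) e.1.1 * (phif mu m e.1.2 - phif mu m s)
  <= 2 * mu ^+ 2 * (s != [::])%:R.
Proof.
move=> l0 g0 m0 m1 /goodbP [b [k [r ->]]].
rewrite /rec_compl_rate big_mkcond /=.
case: k => [|k].
  case: r => [|r].
    by rewrite /mk /= !trans_nil /= /phif /= subrr !mulr0 addr0.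
  change (mk b 0 r.+1) with (nseq r.+1 (false, false)).
  rewrite !trans_zero /phif ?kk_nseq ?kk_mk /=.
  have -> : minn 1 m = 1%N by lia.
  rewrite ?add0r ?addr0 ?mulr0 ?mulr1 ?subrr ?subr0 min0n mulr0 ?subr0 ?add0r; nra.
rewrite (trans_pos lam gam mu b k r) (trans_pos lam gam mu b k r).
case: r => [|r]; rewrite /phif !kk_mk /=.
all: case: (leqP k.+1 m) => km.
all: rewrite ?mulr1 ?mulr0 ?add0r ?addr0 ?subrr ?mulr0 ?addr0.
- have -> : minn k m = k by lia.
  rewrite -natr1; nra.
- have -> : minn k m = m by lia.
  rewrite subrr !mulr0 addr0 add0r; by rewrite mulr_ge0 // exprn_ge0.
-
  have -> : minn k m = k by lia.
  have hc : (minn k.+2 m)%:R <= k%:R + 1 + 1 :> R.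
    by rewrite !natr1 ler_nat; lia.
  rewrite -natr1.
  have hh : 0 <= mu * mu * ((k%:R + 1 + 1) - (minn k.+2 m)%:R).
    by apply: mulr_ge0; [apply: mulr_ge0|rewrite subr_ge0].
  nra.
- have -> : minn k m = m by lia.
  have -> : minn k.+2 m = m by lia.
  rewrite !subrr !mulr0 ?addr0 ?add0r; by rewrite mulr_ge0 // exprn_ge0.
Qed.

Lemma esum_term (R : realType) (T : choiceType) (D : set T) (a : T -> \bar R) s :
  (forall t, (0 <= a t)%E) -> D s -> (a s <= \esum_(t in D) a t)%E.
Proof.
move=> a0 Ds; apply: esum_ge; exists [set s].
  by split; [exact: finite_set1 | move=> t ->].
by rewrite fsbig_set1.
Qed.

Lemma esum_pi_bound (R : realType) (pi : fjfa_state -> R) (h : fjfa_state -> R) M :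
  (forall s, 0 <= pi s) -> \esum_(s in [set: fjfa_state]) (pi s)%:E = 1%E ->
  (forall s, 0 <= h s) -> (forall s, h s <= M) ->
  (\esum_(s in [set: fjfa_state]) (pi s * h s)%:E <= M%:E)%E.
Proof.
move=> pi0 pi1 h0 hM.
have M0 : 0 <= M by apply: le_trans (hM [::]).
apply: le_trans (le_esum (b := fun s => (M%:E * (pi s)%:E)%E) _) _.
  by move=> s _; rewrite -EFinM lee_fin [M * _]mulrC ler_wpM2l.
by rewrite -esumZl // pi1 mule1.
Qed.


Lemma sum_ge0_all (R : realType) (l : seq (R * fjfa_state * fjfa_event)) (P : pred _)
   (F : R * fjfa_state * fjfa_event -> R) :
  (forall e, 0 <= e.1.1 -> 0 <= F e) ->
  all (fun e => 0 <= e.1.1) l -> 0 <= \sum_(e <- l | P e) F e.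
Proof.
move=> HF; elim: l => [|e l IH] /=; first by rewrite big_nil.
move=> /andP[e0 /IH {}IH]; rewrite big_cons; case: (P e) => //.
by apply: addr_ge0 => //; apply: HF.
Qed.

Definition gI (R : realType) (s : fjfa_state) : R := if goodb s then 1 else 0.

Lemma gsum_gI_good (R : realType) (lam gam mu : R) s :
  goodb s -> gsum lam gam mu (@gI R) s = fjfa_out lam gam mu s.
Proof.
move=> gs; rewrite /gsum /fjfa_out big_mkcond [RHS]big_mkcond.
by apply: sum_good => // x t ev Ht /=; rewrite /gI Ht mulr1.
Qed.

Lemma rate_tail_ge (R : realType) (lam gam mu : R) x s :
  0 <= lam -> 0 <= gam -> 0 <= mu ->
  gam <= fjfa_rate lam gam mu (x :: s) s.
Proof.
move=> l0 g0 m0.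
have := trans_ge0 (x :: s) l0 g0 m0; rewrite /fjfa_trans /= => /and3P[_ _ Hall].
have ne : rcons (x :: s) (false, false) != s.
  by apply/eqP => /(congr1 size); rewrite size_rcons /=; lia.
rewrite /fjfa_rate /fjfa_trans big_cons /= (negPf ne) big_cons /= eqxx.
by rewrite lerDl; apply: sum_rate_ge0.
Qed.

Lemma gsum_tail_ge (R : realType) (lam gam mu : R) x s :
  0 <= lam -> 0 <= gam -> 0 <= mu -> goodb s ->
  gam <= gsum lam gam mu (@gI R) (x :: s).
Proof.
move=> l0 g0 m0 gs.
have := trans_ge0 (x :: s) l0 g0 m0; rewrite /fjfa_trans /= => /and3P[_ _ Hall].
have ne : rcons (x :: s) (false, false) != x :: s.
  by apply/eqP => /(congr1 size); rewrite size_rcons /=; lia.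
have ne2 : s != x :: s.
  by apply/eqP => /(congr1 size) /=; lia.
rewrite /gsum /fjfa_trans big_cons /= ne big_cons /= ne2 /gI gs mulr1.
rewrite addrCA lerDl; apply: addr_ge0.
  by apply: mulr_ge0 => //; case: ifP.
by apply: sum_ge0_all Hall => e e0; apply: mulr_ge0 => //; case: ifP.
Qed.

Lemma pi_bad (R : realType) (lam gam mu : R) (pi : fjfa_state -> R) :
  0 < lam -> 0 < gam -> 0 < mu -> fjfa_stationary lam gam mu pi ->
  forall s, ~~ goodb s -> pi s = 0.
Proof.
move=> l0 g0 m0 st; have [pi0 [pi1 bal]] := st.
have l0' := ltW l0; have g0' := ltW g0; have m0' := ltW m0.
have gI0 s : 0 <= @gI R s by rewrite /gI; case: ifP.
have gI1 s : @gI R s <= 1 by rewrite /gI; case: ifP.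
have out0 s : 0 <= fjfa_out lam gam mu s.
  exact: sum_rate_ge0 (trans_ge0 s l0' g0' m0').
have Hg := @gen R lam gam mu pi (@gI R) l0' g0' m0' st gI0.
pose d s := gsum lam gam mu (@gI R) s - @gI R s * fjfa_out lam gam mu s.
have gsum0 s : 0 <= gsum lam gam mu (@gI R) s.
  apply: sum_ge0_all (trans_ge0 s l0' g0' m0') => e e0; exact: mulr_ge0.
have d0 s : 0 <= d s.
  rewrite /d; case: (boolP (goodb s)) => gs.
    by rewrite gsum_gI_good // /gI gs mul1r subrr.
  by rewrite /gI (negPf gs) mul0r subr0.
have Xfin : \esum_(s in [set: fjfa_state]) (pi s * fjfa_out lam gam mu s * @gI R s)%:E
     \is a fin_num.
  rewrite ge0_fin_numE; last by apply: esum_ge0 => s _; rewrite lee_fin !mulr_ge0.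
  apply: le_lt_trans (ltry (lam + gam + 2 * mu)).
  under eq_esum => s _ do rewrite -mulrA.
  apply: esum_pi_bound => // [s|s]; first exact: mulr_ge0.
  rewrite -[X in _ <= X]mulr1; apply: ler_pM => //; exact: out_le.
have Hd : \esum_(s in [set: fjfa_state]) (pi s * d s)%:E = 0%E.
  have E1 : \esum_(s in [set: fjfa_state]) (pi s * gsum lam gam mu (@gI R) s)%:E =
    (\esum_(s in [set: fjfa_state]) (pi s * fjfa_out lam gam mu s * @gI R s)%:E +
     \esum_(s in [set: fjfa_state]) (pi s * d s)%:E)%E.
    rewrite -esumD; last 2 first.
    - by move=> s _; rewrite lee_fin !mulr_ge0.
    - by move=> s _; rewrite lee_fin mulr_ge0.
    by apply: eq_esum => s _; rewrite -EFinD /d; congr EFin; ring.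
  rewrite Hg in E1.
  apply/eqP; rewrite eq_le esum_ge0 ?andbT; last by move=> s _; rewrite lee_fin mulr_ge0.
  by rewrite -(leeD2lE _ _ Xfin) -E1 adde0.
have pid s : pi s * d s = 0.
  apply/eqP; rewrite eq_le mulr_ge0 // andbT -lee_fin (_ : 0%:E = 0%E) // -Hd.
  by apply: esum_term => // t; rewrite lee_fin mulr_ge0.
move=> s; move: {2}(size s) (erefl (size s)) => n; elim: n s => [|n IH] s.
  by move/size0nil => -> /negP; case; exact: (goodb_mk false 0 0).
case: s => [//|x s] /= [sn] bs.
apply/eqP; rewrite eq_le pi0 andbT; rewrite leNgt; apply/negP => ps.
case: (boolP (goodb s)) => gs.
  have := pid (x :: s); rewrite /d /gI (negPf bs) mul0r subr0 => /eqP.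
  rewrite mulf_eq0 gt_eqF //= => /eqP g0s.
  by have := gsum_tail_ge x l0' g0' m0' gs; rewrite g0s leNgt g0.
have ps0 := IH s sn gs.
have := bal s; rewrite ps0 mul0r => Hb.
have : ((pi (x :: s) * fjfa_rate lam gam mu (x :: s) s)%:E <= 0%:E)%E.
  rewrite -Hb; apply: (esum_term (D := [set u | u != s])
    (a := fun u => (pi u * fjfa_rate lam gam mu u s)%:E)).
    by move=> t; rewrite lee_fin mulr_ge0 // sum_rate_ge0 // trans_ge0.
  by rewrite /=; apply/eqP => /(congr1 size) /=; lia.
rewrite lee_fin pmulr_rle0 // leNgt => /negP; apply.
by apply: lt_le_trans g0 _; apply: rate_tail_ge.
Qed.

Lemma gsum_diff (R : realType) (lam gam mu : R) (f : fjfa_state -> R) s :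
  gsum lam gam mu f s - fjfa_out lam gam mu s * f s =
  \sum_(e <- fjfa_trans lam gam mu s) e.1.1 * (f e.1.2 - f s).
Proof.
rewrite /gsum /fjfa_out mulr_suml -sumrB big_mkcond; apply: eq_bigr => e _.
by case: (eqVneq e.1.2 s) => [->|]; rewrite ?subrr ?mulr0 // mulrBr.
Qed.

Definition Am (R : realType) (lam gam mu : R) (m : nat) (s : fjfa_state) : R :=
  (gam + 2 * mu) * rec_compl_rate lam gam mu s * (kk s <= m)%:R.

Lemma key_m (R : realType) (lam gam mu : R) (pi : fjfa_state -> R) (m : nat) :
  0 < lam -> 0 < gam -> 0 < mu -> fjfa_stationary lam gam mu pi -> (0 < m)%N ->
  (\esum_(s in [set: fjfa_state]) (pi s * Am lam gam mu m s)%:E <=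
   \esum_(s in [set: fjfa_state]) (pi s * (2 * mu ^+ 2 * (s != [::])%:R))%:E)%E.
Proof.
move=> l0 g0 m0 st m1; have [pi0 [pi1 bal]] := st.
have l0' := ltW l0; have g0' := ltW g0; have m0' := ltW m0.
have tr0 s := trans_ge0 s l0' g0' m0'.
have out0 s : 0 <= fjfa_out lam gam mu s by exact: sum_rate_ge0.
have phi0 s : 0 <= phif mu m s by rewrite /phif mulr_ge0.
have A0 s : 0 <= Am lam gam mu m s.
  by rewrite /Am !mulr_ge0 ?addr_ge0 ?mulr_ge0 // sum_rate_ge0.
have gs0 s : 0 <= gsum lam gam mu (phif mu m) s.
  by apply: sum_ge0_all (tr0 s) => e e0; exact: mulr_ge0.
have B0 s : 0 <= 2 * mu ^+ 2 * (s != [::])%:R :> R.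
  by rewrite !mulr_ge0 // exprn_ge0.
have Hg := @gen R lam gam mu pi (phif mu m) l0' g0' m0' st phi0.
have Xfin : \esum_(s in [set: fjfa_state]) (pi s * fjfa_out lam gam mu s * phif mu m s)%:E
     \is a fin_num.
  rewrite ge0_fin_numE; last by apply: esum_ge0 => s _; rewrite lee_fin !mulr_ge0.
  apply: le_lt_trans (ltry ((lam + gam + 2 * mu) * (mu * m%:R))).
  under eq_esum => s _ do rewrite -mulrA.
  apply: esum_pi_bound => // [s|s]; first exact: mulr_ge0.
  apply: ler_pM => //; first exact: out_le.
  by rewrite /phif ler_wpM2l // ler_nat geq_minr.
have P s : pi s * (Am lam gam mu m s + gsum lam gam mu (phif mu m) s) <=
           pi s * (2 * mu ^+ 2 * (s != [::])%:R + fjfa_out lam gam mu s * phif mu m s).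
  case: (boolP (goodb s)) => gs; last by rewrite (pi_bad l0 g0 m0 st gs) !mul0r.
  apply: ler_wpM2l => //.
  have := pointwise l0' g0' m0' m1 gs; rewrite -gsum_diff -/(Am lam gam mu m s).
  lra.
have : (\esum_(s in [set: fjfa_state])
     (pi s * (Am lam gam mu m s + gsum lam gam mu (phif mu m) s))%:E <=
   \esum_(s in [set: fjfa_state])
     (pi s * (2 * mu ^+ 2 * (s != [::])%:R + fjfa_out lam gam mu s * phif mu m s))%:E)%E.
  by apply: le_esum => s _; rewrite lee_fin.
under eq_esum => s _ do rewrite mulrDr EFinD.
under [X in (_ <= X)%E]eq_esum => s _ do rewrite mulrDr EFinD.
have Hg' : \esum_(s in [set: fjfa_state]) (pi s * gsum lam gam mu (phif mu m) s)%:E =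
  \esum_(s in [set: fjfa_state]) (pi s * (fjfa_out lam gam mu s * phif mu m s))%:E.
  by rewrite Hg; apply: eq_esum => s _; rewrite mulrA.
have Xfin' : \esum_(s in [set: fjfa_state]) (pi s * (fjfa_out lam gam mu s * phif mu m s))%:E
     \is a fin_num.
  by rewrite -Hg' Hg.
rewrite !esumD; try by move=> s _; rewrite lee_fin !mulr_ge0.
rewrite Hg' leeD2rE //.
by move=> s _; rewrite lee_fin (mulr_ge0 (pi0 s) (A0 s)).
Qed.

Lemma main_ineq (R : realType) (lam gam mu : R) (pi : fjfa_state -> R) :
  0 < lam -> 0 < gam -> 0 < mu -> fjfa_stationary lam gam mu pi ->
  (\esum_(s in [set: fjfa_state]) (pi s * ((gam + 2 * mu) * rec_compl_rate lam gam mu s))%:E <=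
   \esum_(s in [set: fjfa_state]) (pi s * (2 * mu ^+ 2 * (s != [::])%:R))%:E)%E.
Proof.
move=> l0 g0 m0 st.
apply: ge_ereal_sup => _ [X [finX _] <-].
pose m := (\max_(t <- finmap.enum_fset (fset_set X)) kk t).+1.
apply: le_trans (key_m (m := m) l0 g0 m0 st _) => //.
apply: esum_ge; exists X => //.
rewrite !fsbig_finite //; rewrite le_eqVlt; apply/orP; left; apply/eqP.
apply: eq_big_seq => s sX.
have km : (kk s <= m)%N by apply: leqW; apply: leq_bigmax_seq.
by rewrite /Am km mulr1.
Qed.

Local Close Scope classical_set_scope.
Unset Implicit Arguments. Set Strict Implicit.

Theorem theorem5 (R : realType) (lam gam mu : R) (pi : fjfa_state -> R) :
  0 < lam -> 0 < gam -> 0 < mu ->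
  fjfa_stationary lam gam mu pi ->
  let nu := gam + 2 * mu in
  gam * nu / (gam * nu + 2 * mu ^+ 2) <= w_s lam gam mu pi /\
  w_r lam gam mu pi <= 2 * mu ^+ 2 / (gam * nu + 2 * mu ^+ 2).
Proof.
move=> l0 g0 m0 st nu; have [pi0 [pi1 bal]] := st.
have l0' := ltW l0; have g0' := ltW g0; have m0' := ltW m0.
pose En := \esum_(s in [set: fjfa_state]) (pi s * (s != [::])%:R)%:E.
pose Er := \esum_(s in [set: fjfa_state]) (pi s * rec_compl_rate lam gam mu s)%:E.
have rcr0 s : 0 <= rec_compl_rate lam gam mu s.
  exact: sum_rate_ge0 (trans_ge0 s l0' g0' m0').
have En0 : (0 <= En)%E by apply: esum_ge0 => s _; rewrite lee_fin mulr_ge0.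
have Er0 : (0 <= Er)%E by apply: esum_ge0 => s _; rewrite lee_fin mulr_ge0.
have Enfin : En \is a fin_num.
  rewrite ge0_fin_numE //; apply: le_lt_trans (ltry 1).
  by apply: esum_pi_bound => // s; case: (s != [::]).
have Erfin : Er \is a fin_num.
  rewrite ge0_fin_numE //; apply: le_lt_trans (ltry (lam + gam + 2 * mu)).
  by apply: esum_pi_bound => // s; apply: rate_le.
have ST : sys_throughput lam gam mu pi = gam * fine En.
  rewrite /sys_throughput (eq_esum (b := fun s => (gam%:E * (pi s * (s != [::])%:R)%:E)%E)).
    rewrite -esumZl //; last by move=> s; rewrite lee_fin mulr_ge0.
    by rewrite -/En -{1}(fineK Enfin) -EFinM.
  by move=> s _; rewrite sys_rate_eq -EFinM; case: s => [|x s] /=; congr EFin; ring.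
have RT : rec_throughput lam gam mu pi = fine Er by [].
have MI := main_ineq l0 g0 m0 st.
have c1 : 0 <= gam + 2 * mu by rewrite addr_ge0 // mulr_ge0.
have c2 : 0 <= 2 * mu ^+ 2 :> R by rewrite mulr_ge0 // exprn_ge0.
have e1 : (\esum_(s in [set: fjfa_state])
    (pi s * ((gam + 2 * mu) * rec_compl_rate lam gam mu s))%:E) = ((gam + 2 * mu) * fine Er)%:E.
  rewrite EFinM fineK // esumZl //; last by move=> s; rewrite lee_fin mulr_ge0.
  by apply: eq_esum => s _; rewrite -EFinM mulrCA.
have e2 : (\esum_(s in [set: fjfa_state])
    (pi s * (2 * mu ^+ 2 * (s != [::])%:R))%:E) = (2 * mu ^+ 2 * fine En)%:E.
  rewrite EFinM fineK // esumZl //; last by move=> s; rewrite lee_fin mulr_ge0.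
  by apply: eq_esum => s _; rewrite -EFinM mulrCA.
rewrite e1 e2 lee_fin in MI.
have pos : 0 < fine En.
  rewrite lt_def fine_ge0 // andbT; apply/negP => /eqP E0.
  have En0' : En = 0%E by rewrite -(fineK Enfin) E0.
  have pine s : s != [::] -> pi s = 0.
    move=> sn; apply/eqP; rewrite eq_le pi0 andbT -lee_fin (_ : 0%:E = 0%E) // -En0'.
    have := esum_term (D := [set: fjfa_state])
       (a := fun t => (pi t * (t != [::])%:R)%:E) (s := s) _ I.
    by rewrite /= sn mulr1; apply => t; rewrite lee_fin mulr_ge0.
  have pinil : pi [::] = 0.
    have := bal [::]; rewrite out_nil esum1; last first.
      by move=> u /= un; rewrite pine // mul0r.
    by move/(congr1 fine) => /= /esym /eqP; rewrite mulf_eq0 (gt_eqF l0) orbF => /eqP.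
  have : \esum_(s in [set: fjfa_state]) (pi s)%:E = 0%E.
    by apply: esum1 => s _; case: (eqVneq s [::]) => [->|/pine ->]; rewrite ?pinil.
  by rewrite pi1 => -[] /eqP; rewrite oner_eq0.
rewrite /w_s /w_r ST RT /nu.
set p := fine En in MI pos *; set q := fine Er in MI *.
have q0 : 0 <= q by rewrite /q fine_ge0.
have hint : 0 <= gam * (2 * mu ^+ 2 * p - (gam + 2 * mu) * q).
  by rewrite mulr_ge0 // subr_ge0.
have d1 : 0 < gam * p + q by rewrite ltr_wpDr // mulr_gt0.
have d2 : 0 < gam * (gam + 2 * mu) + 2 * mu ^+ 2.
  by rewrite ltr_wpDr ?mulr_ge0 ?exprn_ge0 // mulr_gt0 // ltr_wpDr // mulr_ge0.
split.
  rewrite ler_pdivlMr // mulrAC ler_pdivrMr //; nra.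
rewrite ler_pdivrMr // mulrAC ler_pdivlMr //; nra.
Qed.
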